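(* The total domination polynomials of the following graphs are unimodal: the helm graph $H_n$ ($n\ge 3$); the generalized helm graph $H_{n,m}$ ($n\ge 3$, $m\ge 1$); the graph $H(3)$ for every graph $H$; and every sunlike graph $G(v_1^{k_1},\dots,v_n^{k_n})$ with $k_1,\dots,k_n\ge 1$.
   Context: The wheel $W_n$ ($n\ge3$) is the cycle $C_n$ together with one extra vertex (hub) adjacent to all cycle vertices. The helm $H_n$ is obtained from $W_n$ by attaching one pendant edge at each vertex of the $n$-cycle; the generalized helm $H_{n,m}$ is obtained from $W_n$ by attaching $m$ pendant edges at each vertex of the $n$-cycle. For a graph $H$, $H(3)$ is obtained by identifying each vertex of $H$ with an end vertex of its own copy of the path $P_3$. For a graph $G$ with vertices $v_1,\dots,v_n$ and positive integers $k_i$, the sunlike graph $G(v_1^{k_1},\dots,v_n^{k_n})$ is obtained by attaching $k_i$ new pendant vertices to $v_i$ for each $i$. For a finite simple graph $G=(V,E)$, a set $D\subseteq V$ is a total dominating set if every vertex of $V$ is adjacent to some vertex of $D$; $d_t(G,i)$ is the number of total dominating sets of size $i$, and $D_t(G,x)=\sum_{i} d_t(G,i)x^i$. A polynomial $\sum a_ix^i$ is unimodal if $a_0\le\dots\le a_k\ge a_{k+1}\ge\dots\ge a_N$ for some $k$. *)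

(* Defs.v *)
From HB Require Import structures.
From mathcomp Require Import all_boot all_order all_algebra.
Set Implicit Arguments. Unset Strict Implicit. Unset Printing Implicit Defensive.
Import Order.TTheory GRing.Theory Num.Theory.
Local Open Scope ring_scope.

(* A finite simple graph is a finType T with a symmetric irreflexive
   adjacency relation e : rel T. *)

Definition total_dominating (T : finType) (e : rel T) (D : {set T}) : bool :=
  [forall v, [exists u in D, e v u]].

Definition dt (T : finType) (e : rel T) (i : nat) : nat :=
  #|[set D : {set T} | total_dominating e D & #|D| == i]|.

(* D_t(G,x) = sum_i d_t(G,i) x^i  (d_t(G,i) = 0 for i > |V|) *)
Definition Dt (T : finType) (e : rel T) : {poly int} :=
  \poly_(i < #|T|.+1) (dt e i)%:R.

Definition unimodal (p : {poly int}) : Prop :=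
  exists k : nat,
    (forall i j : nat, (i <= j <= k)%N -> p`_i <= p`_j) /\
    (forall i j : nat, (k <= i <= j)%N -> (j < size p)%N -> p`_j <= p`_i).

Definition cyc_adj (n : nat) (i j : 'I_n) : bool :=
  (nat_of_ord j == (nat_of_ord i).+1 %% n)%N || (nat_of_ord i == (nat_of_ord j).+1 %% n)%N.

(* Helm H_n: hub (inl tt), cycle vertices inr (inl i), pendant inr (inr i)
   attached to cycle vertex i. *)
Definition helm_V (n : nat) : finType := (unit + ('I_n + 'I_n))%type.
Definition helm_adj (n : nat) : rel (helm_V n) := fun x y =>
  match x, y with
  | inl _, inr (inl _) => true
  | inr (inl _), inl _ => true
  | inr (inl i), inr (inl j) => cyc_adj i j
  | inr (inl i), inr (inr j) => i == j
  | inr (inr i), inr (inl j) => i == j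
  | _, _ => false
  end.

(* Generalized helm H_{n,m}: pendants inr (inr (i, l)), l < m, attached to
   cycle vertex i. *)
Definition genhelm_V (n m : nat) : finType := (unit + ('I_n + 'I_n * 'I_m))%type.
Definition genhelm_adj (n m : nat) : rel (genhelm_V n m) := fun x y =>
  match x, y with
  | inl _, inr (inl _) => true
  | inr (inl _), inl _ => true
  | inr (inl i), inr (inl j) => cyc_adj i j
  | inr (inl i), inr (inr p) => i == p.1
  | inr (inr p), inr (inl j) => p.1 == j
  | _, _ => false
  end.

(* H(3): vertex (v,0) is v itself; (v,0)-(v,1)-(v,2) is the attached P_3. *)
Definition H3_adj (T : finType) (e : rel T) : rel (T * 'I_3)%type := fun x y =>
  [&& (nat_of_ord x.2 == 0)%N, (nat_of_ord y.2 == 0)%N & e x.1 y.1]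
  || ((x.1 == y.1) &&
      ((nat_of_ord x.2 == (nat_of_ord y.2).+1)%N || (nat_of_ord y.2 == (nat_of_ord x.2).+1)%N)).

(* Sunlike graph G(v^{k v}): original vertices inl v, and k v new pendant
   vertices inr (Tagged v l), l < k v, adjacent to v. *)
Definition sunlike_V (T : finType) (k : T -> nat) : finType :=
  (T + {v : T & 'I_(k v)})%type.
Definition sunlike_adj (T : finType) (e : rel T) (k : T -> nat) : rel (sunlike_V k) :=
  fun x y =>
  match x, y with
  | inl u, inl v => e u v
  | inl u, inr p => tag p == u
  | inr p, inl u => tag p == u
  | inr _, inr _ => false
  end.

(* Main.v *)
Require Import Defs.
From HB Require Import structures.
From mathcomp Require Import all_boot all_order all_algebra.
From mathcomp Require Import zify ring.
From Stdlib Require Import Classical.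
Set Implicit Arguments. Unset Strict Implicit. Unset Printing Implicit Defensive.
Import Order.TTheory GRing.Theory Num.Theory.
Local Open Scope ring_scope.


Definition TP2 (p : {poly int}) : Prop :=
  (forall i, 0 <= p`_i) /\
  (forall i j k l : nat, (i <= j <= l)%N -> (i <= k <= l)%N -> (i + l = j + k)%N ->
     p`_i * p`_l <= p`_j * p`_k).

Lemma chain_up (a : nat -> int) (k : nat) :
  (forall m, (m < k)%N -> a m <= a m.+1) ->
  forall i j, (i <= j <= k)%N -> a i <= a j.
Proof.
move=> H i j /andP[]; elim: j => [|j IH].
  by rewrite leqn0 => /eqP -> _.
rewrite leq_eqVlt => /orP[/eqP -> //| ]; rewrite ltnS => hij hjk.
exact: le_trans (IH hij (ltnW hjk)) (H _ hjk).
Qed.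

Lemma chain_down (a : nat -> int) (k : nat) :
  (forall m, (k <= m)%N -> a m.+1 <= a m) ->
  forall i j, (k <= i <= j)%N -> a j <= a i.
Proof.
move=> H i j /andP[hki]; elim: j => [|j IH].
  by rewrite leqn0 => /eqP ->.
rewrite leq_eqVlt => /orP[/eqP -> //| ]; rewrite ltnS => hij.
exact: le_trans (H _ (leq_trans hki hij)) (IH hij).
Qed.

Lemma TP2_unimodal p : TP2 p -> unimodal p.
Proof.
move=> [pos tp].
case: (classic (exists m, p`_m.+1 < p`_m)) => [Hex|Hno]; last first.
  exists (size p); split.
    apply: chain_up => m _; rewrite leNgt; apply/negP => hlt; apply: Hno; by exists m.
  move=> i j /andP[hi hij] hj; have := leq_trans hi hij; by rewrite leqNgt hj.
have Hex' : exists m, (fun m => p`_m.+1 < p`_m) m by [].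
case: (ex_minnP Hex') => k hk kmin.
exists k; split.
  apply: chain_up => m hm; rewrite leNgt; apply/negP => hlt.
  by have := kmin _ hlt; rewrite leqNgt hm.
suff Hd : forall m, (k <= m)%N -> p`_m.+1 <= p`_m.
  by move=> i j hij _; exact: (chain_down (a := fun i => p`_i) Hd hij).
have pk : 0 < p`_k by apply: le_lt_trans (pos _) hk.
have S : forall t, (p`_(k + t).+1 < p`_(k + t)) || (p`_(k + t).+1 == 0).
  elim=> [|t IH]; first by rewrite addn0 hk.
  case/boolP: (p`_(k + t).+1 == 0) => [/eqP h0|hn0].
    have := tp k (k + t).+1 k.+1 (k + t.+1).+1.
    rewrite h0 mul0r => /(_ _ _ _)/= h.
    have h' : p`_k * p`_(k + t.+1).+1 <= 0 by apply: h; lia.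
    have h2 := pos (k + t.+1).+1.
    have : p`_(k + t.+1).+1 = 0 by nia.
    by move=> ->; rewrite eqxx orbT.
  move: IH; rewrite (negbTE hn0) orbF => IH.
  have hp : 0 < p`_(k + t).+1 by rewrite lt_def hn0 pos.
  have := tp (k + t) (k + t).+1 (k + t).+1 (k + t).+2.
  move=> /(_ _ _ _) h.
  have h' : p`_(k + t) * p`_(k + t).+2 <= p`_(k + t).+1 * p`_(k + t).+1 by apply: h; lia.
  rewrite addnS.
  have : p`_(k + t).+2 < p`_(k + t).+1 by nia.
  by move=> ->.
move=> m hm; have := S (m - k)%N; rewrite subnKC //.
case/orP=> [/ltW //|/eqP ->]; exact: pos.
Qed.



Definition Bq (q : {poly int}) (i n : nat) : int := if (i <= n)%N then q`_(n - i) else 0.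
Definition Ap (p : {poly int}) (e i : nat) : int := if (e <= i)%N then p`_(i - e) else 0.

Lemma convc (p q : {poly int}) n M : (n < M)%N -> (p * q)`_n = \sum_(0 <= i < M) p`_i * Bq q i n.
Proof.
move=> hnM; rewrite coefM.
rewrite (big_ord_widen M (fun i => p`_i * q`_(n - i))) // big_mkcond /= [RHS]big_mkord.
apply: eq_bigr => i _; rewrite /Bq ltnS; by case: (i <= n)%N; rewrite ?mulr0.
Qed.

Lemma convs (p q : {poly int}) n e M : (n < M)%N ->
  (p * q)`_n = \sum_(0 <= i < M + e) Ap p e i * Bq q i (n + e).
Proof.
move=> hnM; rewrite (convc p q hnM).
rewrite [RHS](big_cat_nat (n := e)) ?leq_addl //=.
have -> : \sum_(0 <= i < e) Ap p e i * Bq q i (n + e) = 0.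
  rewrite big_nat_cond big1 //.
  by move=> i /andP[/andP[_ hi] _]; rewrite /Ap leqNgt hi mul0r.
rewrite add0r -{1}(add0n e) big_addn addnK; apply: eq_bigr => i _.
by rewrite /Ap /Bq leq_addl addnK leq_add2r subnDr.
Qed.

Lemma binet (u u' v v' : nat -> int) (L : nat) :
  (forall i j, (i < j)%N -> 0 <= (u i * u' j - u j * u' i) * (v i * v' j - v j * v' i)) ->
  (\sum_(0 <= i < L) u i * v' i) * (\sum_(0 <= i < L) u' i * v i) <=
  (\sum_(0 <= i < L) u i * v i) * (\sum_(0 <= i < L) u' i * v' i).
Proof.
move=> H.
have HF : forall i j, 0 <= (u i * u' j - u j * u' i) * (v i * v' j - v j * v' i).
  move=> i j; case: (ltngtP i j) => [/H //|hji|->]; last by rewrite subrr mul0r.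
  have := H _ _ hji.
  have -> : (u j * u' i - u i * u' j) * (v j * v' i - v i * v' j) =
            (u i * u' j - u j * u' i) * (v i * v' j - v j * v' i) by ring.
  done.
rewrite -subr_ge0.
pose G i j := u i * v i * (u' j * v' j) - u i * v' i * (u' j * v j).
have E : (\sum_(0<=i<L) u i * v i) * (\sum_(0<=i<L) u' i * v' i) -
         (\sum_(0<=i<L) u i * v' i) * (\sum_(0<=i<L) u' i * v i) =
         \sum_(0<=i<L) \sum_(0<=j<L) G i j.
  rewrite !big_distrl /= -sumrB; apply: eq_bigr => i _.
  by rewrite !big_distrr /= -sumrB.
rewrite E.
have E2 : \sum_(0<=i<L) \sum_(0<=j<L) G i j + \sum_(0<=i<L) \sum_(0<=j<L) G i j =
  \sum_(0<=i<L) \sum_(0<=j<L) ((u i * u' j - u j * u' i) * (v i * v' j - v j * v' i)).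
  rewrite {2}(exchange_big_nat) /= -big_split /=; apply: eq_bigr => i _.
  rewrite -big_split /=; apply: eq_bigr => j _; rewrite /G; ring.
have : 0 <= \sum_(0<=i<L) \sum_(0<=j<L) G i j + \sum_(0<=i<L) \sum_(0<=j<L) G i j.
  by rewrite E2; apply: sumr_ge0 => i _; apply: sumr_ge0 => j _; exact: HF.
set S := \sum_(0<=i<L) _; lia.
Qed.

Lemma TP2M (p q : {poly int}) : TP2 p -> TP2 q -> TP2 (p * q).
Proof.
move=> [pp tp] [qp tq]; split.
  by move=> n; rewrite coefM; apply: sumr_ge0 => i _; exact: mulr_ge0.
have Bpos : forall i n, 0 <= Bq q i n by move=> i n; rewrite /Bq; case: ifP.
have f1 : forall e a b, (a < b)%N -> 0 <= p`_a * Ap p e b - p`_b * Ap p e a.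
  move=> e a b hab; rewrite /Ap.
  case: (leqP e a) => hea.
    rewrite (leq_trans hea (ltnW hab)) subr_ge0 mulrC.
    apply: tp; lia.
  rewrite mulr0 subr0; case: ifP => _; last by rewrite mulr0.
  exact: mulr_ge0.
have f2 : forall a b k l, (a < b)%N -> (k <= l)%N ->
    0 <= Bq q a k * Bq q b l - Bq q b k * Bq q a l.
  move=> a b k l hab hkl.
  case: (leqP b k) => hbk; last first.
    have -> : Bq q b k = 0 by rewrite /Bq leqNgt hbk.
    rewrite mul0r subr0; exact: mulr_ge0.
  rewrite /Bq hbk (leq_trans hbk hkl) (leq_trans (ltnW hab) hbk).
  rewrite (leq_trans (ltnW hab) (leq_trans hbk hkl)) subr_ge0.
  apply: tq; lia.
move=> i j k l /andP[hij hjl] /andP[hik hkl] hsum.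
set L := (l.+1 + (k - i))%N.
have ck : (p * q)`_k = \sum_(0 <= a < L) p`_a * Bq q a k by apply: convc; lia.
have cl : (p * q)`_l = \sum_(0 <= a < L) p`_a * Bq q a l by apply: convc; lia.
have ci : (p * q)`_i = \sum_(0 <= a < L) Ap p (k - i) a * Bq q a k.
  rewrite (@convs p q _ (k - i)%N l.+1); last by lia.
  by have -> : (i + (k - i))%N = k by lia.
have cj : (p * q)`_j = \sum_(0 <= a < L) Ap p (k - i) a * Bq q a l.
  rewrite (@convs p q _ (k - i)%N l.+1); last by lia.
  by have -> : (j + (k - i))%N = l by lia.
rewrite ci cj ck cl mulrC [X in _ <= X]mulrC.
apply: binet => a b hab; apply: mulr_ge0; [exact: f1 | apply: f2 => //; lia].
Qed.



Lemma TP2_bin01 (p : {poly int}) m : (m <= 1)%N -> (forall i, p`_i = ('C(m, i))%:R) -> TP2 p.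
Proof.
move=> hm hp; split; first by move=> i; rewrite hp ler0n.
have b1 : forall t, (t <= m)%N -> 'C(m, t) = 1%N.
  move=> t ht; move: hm; rewrite leq_eqVlt ltnS leqn0 => /orP[] /eqP hm;
  move: ht; rewrite hm; first by case: t => [|[|]].
  by rewrite leqn0 => /eqP ->.
move=> i j k l /andP[hij hjl] /andP[hik hkl] _; rewrite !hp.
case: (leqP l m) => hl.
  by rewrite !b1 //; lia.
by rewrite (bin_small hl) mulr0 mulr_ge0 ?ler0n.
Qed.

Lemma TP2_zero (p q : {poly int}) : TP2 p -> q`_0 = 0 ->
  (forall i, (0 < i)%N -> q`_i = p`_i) -> TP2 q.
Proof.
move=> [pp tp] q0 qi.
have qpos : forall i, 0 <= q`_i by case=> [|i]; rewrite ?q0 // qi.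
split => //.
move=> i j k l /andP[hij hjl] /andP[hik hkl] hs.
case: i hij hik hs => [|i] hij hik hs.
  by rewrite q0 mul0r; exact: mulr_ge0.
have hj : (0 < j)%N by lia. have hk : (0 < k)%N by lia. have hl : (0 < l)%N by lia.
rewrite !qi //; apply: tp => //; apply/andP; split => //.
Qed.

Definition GF (V : finType) (U : {set V}) (P : pred {set V}) : {poly int} :=
  \sum_(D : {set V} | (D \subset U) && P D) 'X^#|D|.

Lemma coef_GF V (U : {set V}) P i :
  (GF U P)`_i = \sum_(D : {set V} | (D \subset U) && P D) (#|D| == i)%:R.
Proof. rewrite /GF coef_sum; apply: eq_bigr => D _; by rewrite coefXn eq_sym. Qed.

Lemma GFM V (U1 U2 : {set V}) (P P1 P2 : pred {set V}) :
  [disjoint U1 & U2] ->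
  (forall D : {set V}, D \subset U1 :|: U2 -> P D = P1 (D :&: U1) && P2 (D :&: U2)) ->
  GF (U1 :|: U2) P = GF U1 P1 * GF U2 P2.
Proof.
move=> dis HP.
rewrite /GF [RHS]big_distrl /=.
rewrite [LHS](partition_big (fun D : {set V} => D :&: U1) (fun D1 : {set V} => (D1 \subset U1) && P1 D1)) /=; last first.
  move=> D /andP[sD PD]; rewrite subsetIr /=; by move: PD; rewrite HP // => /andP[].
apply: eq_bigr => D1 /andP[sD1 P1D1].
rewrite big_distrr /=.
rewrite (reindex_onto (fun D2 : {set V} => D1 :|: D2) (fun D : {set V} => D :&: U2)) /=; last first.
  move=> D /andP[/andP[sD PD] /eqP hD1]; rewrite -hD1 -setIUr.
  by apply/setIidPl.
apply: eq_big => D2.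
  case hD2 : (D2 \subset U2).
    have e1 : (D1 :|: D2) :&: U1 = D1.
      apply/setP => x; rewrite !inE; case xD1: (x \in D1); first by rewrite (subsetP sD1).
      case xD2: (x \in D2) => //=; have xU2 := subsetP hD2 _ xD2.
      by apply/negP => xU1; move: (disjointFr dis xU1); rewrite xU2.
    have e2 : (D1 :|: D2) :&: U2 = D2.
      apply/setP => x; rewrite !inE; case xD2: (x \in D2); first by rewrite orbT (subsetP hD2).
      rewrite orbF; case xD1: (x \in D1) => //=; have xU1 := subsetP sD1 _ xD1.
      by rewrite (disjointFr dis xU1).
    rewrite HP ?setUSS // e1 e2 P1D1 !eqxx /=.
    by rewrite !andbT.
  rewrite /=; apply/negbTE/negP => /andP[_ /eqP h]; move/negP: hD2; apply.
  by rewrite -h subsetIr.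
move=> /andP[_ /eqP h] ; rewrite -exprD; congr ('X^_).
rewrite cardsU; suff -> : D1 :&: D2 = set0 by rewrite cards0 subn0.
apply/setP => x; rewrite !inE; case xD1: (x \in D1) => //=.
have xU1 := subsetP sD1 _ xD1; apply/negbTE/negP => xD2.
have : x \in (D1 :|: D2) :&: U2 by rewrite h.
by rewrite !inE (disjointFr dis xU1) andbF.
Qed.



Lemma GF0_coef (V : finType) i : (GF (set0 : {set V}) predT)`_i = ('C(0, i))%:R.
Proof.
rewrite coef_GF (big_pred1 set0); last by move=> D; rewrite /= subset0 andbT.
by rewrite cards0 bin0n eq_sym.
Qed.

Lemma GF1_coef (V : finType) (a : V) i : (GF [set a] predT)`_i = ('C(1, i))%:R.
Proof.
rewrite coef_GF (bigD1 set0) /=; last by rewrite sub0set.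
rewrite (big_pred1 [set a]); last first.
  move=> D; rewrite /= subset1 andbT; case: (D =P set0) => [->|/eqP nD].
    rewrite orbT andbF; apply/esym/eqP => h; by have := set11 a; rewrite -h inE.
  by rewrite orbF andbT.
rewrite cards0 cards1; case: i => [|[|i]] //=.
Qed.

Lemma GF_true_TP2 (V : finType) (U : {set V}) : TP2 (GF U predT).
Proof.
move: {2}#|U| (erefl #|U|) => n; elim: n U => [|n IH] U hU.
  rewrite (cards0_eq hU); apply: (@TP2_bin01 _ 0) => // i; exact: GF0_coef.
have [a aU] : exists a, a \in U by apply/set0Pn; rewrite -card_gt0 hU.
rewrite -(setD1K aU) (@GFM _ _ _ _ predT predT) //.
- apply: TP2M; first by apply: (@TP2_bin01 _ 1) => // i; exact: GF1_coef.
  by apply: IH; move: hU; rewrite (cardsD1 a U) aU add1n => -[].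
- by rewrite disjoints1 !inE eqxx.
Qed.

Definition Pf (V : finType) (F : {set {set V}}) : pred {set V} :=
  fun D => [forall B in F, D :&: B != set0].

Lemma GF_ne_TP2 (V : finType) (B : {set V}) : TP2 (GF B (fun D => D != set0)).
Proof.
apply: (TP2_zero (GF_true_TP2 B)).
  rewrite coef_GF big1 // => D /andP[_ hD]; by rewrite cards_eq0 (negbTE hD).
move=> i hi; rewrite !coef_GF [LHS]big_mkcond [RHS]big_mkcond; apply: eq_bigr => D _ /=.
case: (D =P set0) => [->|] //=; rewrite cards0; case: i hi => //= i _.
by rewrite !if_same.
Qed.

Lemma GF_blocks (V : finType) (n : nat) : forall (F : {set {set V}}) (U : {set V}), #|F| = n ->
  trivIset F -> (forall B, B \in F -> B \subset U) -> TP2 (GF U (Pf F)).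
Proof.
elim: n => [|n IH] F U hF triv sub.
  have -> : GF U (Pf F) = GF U predT.
    apply: eq_bigl => D; rewrite /Pf /= (cards0_eq hF); congr andb.
    by apply/forallP => B; rewrite inE.
  exact: GF_true_TP2.
have [B BF] : exists B, B \in F by apply/set0Pn; rewrite -card_gt0 hF.
have sB := sub B BF.
have hU : U = B :|: (U :\: B) by rewrite -{1}(setID U B) (setIidPr sB).
have dis : forall B', B' \in F :\ B -> [disjoint B' & B].
  move=> B'; rewrite !inE => /andP[nB B'F].
  by move/trivIsetP: triv => /(_ B' B B'F BF nB).
rewrite hU (@GFM _ _ _ _ (fun D => D != set0) (Pf (F :\ B))).
- apply: TP2M; first exact: GF_ne_TP2.
  apply: IH.
  + by move: hF; rewrite (cardsD1 B F) BF add1n => -[].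
  + by apply: trivIsetS triv; apply: subD1set.
  + move=> B' hB'; apply/subsetP => x xB'; rewrite !inE.
    have := dis _ hB'; move/disjointFr => /(_ x xB') ->.
    move: hB'; rewrite inE => /andP[_ /sub /subsetP]; exact.
- rewrite disjoints_subset; apply/subsetP => x xB; by rewrite !inE xB.
- move=> D _; rewrite /Pf.
  apply/idP/idP.
  + move/forallP => H; apply/andP; split.
      by have := H B; rewrite BF.
    apply/forallP => B'; apply/implyP => hB'.
    have := H B'; move: (hB'); rewrite inE => /andP[_ -> ] /=.
    congr (_ != _); apply/setP => x; rewrite !inE.
    case xB': (x \in B'); rewrite ?andbF //.
    have := dis _ hB'; move/disjointFr => /(_ x xB') ->.
    move: hB'; rewrite inE => /andP[_ /sub /subsetP /(_ x xB') ->].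
    by rewrite /= !andbT.
  + move=> /andP[h1 /forallP h2]; apply/forallP => B'; apply/implyP => B'F.
    case: (B' =P B) => [->//|/eqP nB].
    have hB' : B' \in F :\ B by rewrite !inE nB.
    have := h2 B'; rewrite hB' /=.
    apply: contra => /eqP h; apply/eqP; apply/setP => x; move/setP: h => /(_ x).
    by rewrite !inE; case: (x \in D); case: (x \in B') => //=; rewrite andbF.
Qed.



Lemma Dt_GF (T : finType) (e : rel T) : Dt e = GF [set: T] (total_dominating e).
Proof.
apply/polyP => i; rewrite coef_poly coef_GF.
have -> : \sum_(D : {set T} | (D \subset [set: T]) && total_dominating e D) (#|D| == i)%:R
    = (dt e i)%:R :> int.
  rewrite -natr_sum; congr (_%:R); rewrite /dt -sum1dep_card [RHS]big_mkcondr /=.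
  apply: eq_big => [D|D _]; first by rewrite subsetT.
  by case: (#|D| == i).
case: ifP => // hi; rewrite /dt.
suff -> : [set D : {set T} | total_dominating e D & #|D| == i] = set0 by rewrite cards0.
apply/setP => D; rewrite !inE; apply/negbTE; apply/negP => /andP[_ /eqP hD].
by have := max_card D; rewrite hD -ltnS hi.
Qed.

Lemma TD_Pf (V : finType) (e : rel V) (F : {set {set V}}) :
  (forall B, B \in F -> exists v, forall u, e v u -> u \in B) ->
  (forall v, exists2 B, B \in F & forall u, u \in B -> e v u) ->
  forall D, total_dominating e D = Pf F D.
Proof.
move=> H1 H2 D; apply/idP/idP.
- move=> /forallP td; apply/forallP => B; apply/implyP => BF.
  have [v hv] := H1 B BF; have /existsP [u /andP[uD evu]] := td v.
  by apply/set0Pn; exists u; rewrite inE uD (hv _ evu).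
- move=> /forallP pf; apply/forallP => v; have [B BF hB] := H2 v.
  have /implyP/(_ BF)/set0Pn [u] := pf B; rewrite inE => /andP[uD uB].
  by apply/existsP; exists u; rewrite uD hB.
Qed.

Definition blk (V L : finType) (lab : V -> option L) (l : L) : {set V} :=
  [set u | lab u == Some l].

Lemma main_lab (V L : finType) (e : rel V) (lab : V -> option L) :
  (forall l u0, lab u0 = Some l -> exists v, forall u, e v u -> lab u = Some l) ->
  (forall v, exists l u0, lab u0 = Some l /\ forall u, lab u = Some l -> e v u) ->
  unimodal (Dt e).
Proof.
move=> H1 H2.
pose F := [set blk lab l | l in [pred l | blk lab l != set0]].
have triv : trivIset F.
  apply/trivIsetP => A B /imsetP[l1 _ ->] /imsetP[l2 _ ->] neq.
  rewrite -setI_eq0; apply/eqP/setP => x; rewrite !inE.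
  apply/negbTE/negP => /andP[/eqP h1 /eqP h2]; move/negP: neq; apply.
  by move: h2; rewrite h1 => -[->].
rewrite Dt_GF.
have -> : GF [set: V] (total_dominating e) = GF [set: V] (Pf F).
  apply: eq_bigl => D; congr andb; apply: TD_Pf.
  - move=> B /imsetP[l]; rewrite inE => /set0Pn[u0]; rewrite inE => /eqP hu0 ->.
    have [v hv] := H1 _ _ hu0; exists v => u /hv hu; by rewrite inE hu.
  - move=> v; have [l [u0 [hu0 hl]]] := H2 v; exists (blk lab l).
      by apply/imsetP; exists l => //; rewrite inE; apply/set0Pn; exists u0; rewrite inE hu0.
    by move=> u; rewrite inE => /eqP /hl.
apply: TP2_unimodal; apply: (@GF_blocks _ #|F|) => // B _; exact: subsetT.
Qed.



Lemma helm_ok n : (3 <= n)%N -> unimodal (Dt (@helm_adj n)).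
Proof.
move=> hn; have n0 : (0 < n)%N by lia.
pose lab (x : helm_V n) : option 'I_n :=
  match x with inr (inl i) => Some i | _ => None end.
apply: (@main_lab _ _ _ lab).
- move=> l u0 _; exists (inr (inr l)) => -[[]|[j|j]] //= /eqP -> //.
- case=> [[]|[i|i]].
  + exists (Ordinal n0), (inr (inl (Ordinal n0))); split => // -[[]|[j|j]] //.
  + exists (Ordinal (ltn_pmod i.+1 n0)), (inr (inl (Ordinal (ltn_pmod i.+1 n0)))).
    split => // -[[]|[j|j]] //= [->]; by rewrite /cyc_adj /= eqxx.
  + exists i, (inr (inl i)); split => // -[[]|[j|j]] //= [->]; by rewrite eqxx.
Qed.

Lemma genhelm_ok n m : (3 <= n)%N -> (1 <= m)%N -> unimodal (Dt (@genhelm_adj n m)).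
Proof.
move=> hn hm; have n0 : (0 < n)%N by lia.
pose lab (x : genhelm_V n m) : option 'I_n :=
  match x with inr (inl i) => Some i | _ => None end.
apply: (@main_lab _ _ _ lab).
- move=> l u0 _; exists (inr (inr (l, Ordinal hm))) => -[[]|[j|j]] //= /eqP -> //.
- case=> [[]|[i|[i l]]].
  + exists (Ordinal n0), (inr (inl (Ordinal n0))); split => // -[[]|[j|j]] //.
  + exists (Ordinal (ltn_pmod i.+1 n0)), (inr (inl (Ordinal (ltn_pmod i.+1 n0)))).
    split => // -[[]|[j|j]] //= [->]; by rewrite /cyc_adj /= eqxx.
  + exists i, (inr (inl i)); split => // -[[]|[j|j]] //= [->]; by rewrite eqxx.
Qed.



Lemma H3_ok (T : finType) (e : rel T) : unimodal (Dt (H3_adj e)).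
Proof.
pose lab (x : (T * 'I_3)%type) : option (T + T)%type :=
  if (nat_of_ord x.2 == 1)%N then Some (inl x.1) else Some (inr x.1).
have o0 : (0 < 3)%N by []. have o1 : (1 < 3)%N by []. have o2 : (2 < 3)%N by [].
apply: (@main_lab _ _ _ lab).
- move=> [w|w] u0 _.
  + exists (w, Ordinal o2) => -[u1 [u2 hu2]]; rewrite /H3_adj /lab /=.
    by case: u2 hu2 => [|[|[|]]] //= _; rewrite ?andbF // => /andP[/eqP -> _].
  + exists (w, Ordinal o1) => -[u1 [u2 hu2]]; rewrite /H3_adj /lab /=.
    by case: u2 hu2 => [|[|[|]]] //= _; rewrite ?andbF ?andbT // => /eqP ->.
- move=> [w [t ht]].
  case: t ht => [|[|[|//]]] ht.
  + exists (inl w), (w, Ordinal o1); split => // -[u1 [u2 hu2]]; rewrite /H3_adj /lab /=.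
    by case: u2 hu2 => [|[|[|]]] //= _ [->]; rewrite eqxx.
  + exists (inr w), (w, Ordinal o0); split => // -[u1 [u2 hu2]]; rewrite /H3_adj /lab /=.
    by case: u2 hu2 => [|[|[|]]] //= _ [->]; rewrite eqxx.
  + exists (inl w), (w, Ordinal o1); split => // -[u1 [u2 hu2]]; rewrite /H3_adj /lab /=.
    by case: u2 hu2 => [|[|[|]]] //= _ [->]; rewrite eqxx.
Qed.



Lemma sun_ok (T : finType) (e : rel T) (k : T -> nat) :
  (forall v, (1 <= k v)%N) -> unimodal (Dt (@sunlike_adj T e k)).
Proof.
move=> kpos.
pose iso (v : T) := [forall u, ~~ e v u].
pose lab (x : sunlike_V k) : option (T + T)%type :=
  match x with inl v => Some (inl v)
  | inr p => if iso (tag p) then Some (inr (tag p)) else None end.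
pose pend (w : T) : sunlike_V k := inr (Tagged (fun v => 'I_(k v)) (Ordinal (kpos w))).
apply: (@main_lab _ _ _ lab).
- move=> [w|w] u0 hu0.
  + exists (pend w) => -[u'|p] //= /eqP <- //.
  + case: u0 hu0 => [u'|p] //=; case: ifP => // isop [hw].
    exists (inl w) => -[u'|p'] /=.
      by move: isop; rewrite hw => /forallP /(_ u') /negbTE ->.
    by move/eqP => ->; rewrite -hw isop.
- move=> [w|p].
  + case/boolP: (iso w) => isow.
      exists (inr w), (pend w); split; first by rewrite /= isow.
      move=> [u'|p] //=; case: ifP => // _ [<-]; exact: eqxx.
    move: isow; rewrite negb_forall => /existsP [u' /negbNE ewu].
    exists (inl u'), (inl u'); split => // -[u''|p] //=; last by case: ifP.
    by move=> [->].
  + exists (inl (tag p)), (inl (tag p)); split => // -[u''|p'] //=; last by case: ifP.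
    by move=> [->].
Qed.


Theorem mainTheorem11 :
  (forall n : nat, (3 <= n)%N -> unimodal (Dt (@helm_adj n))) /\
  (forall n m : nat, (3 <= n)%N -> (1 <= m)%N -> unimodal (Dt (@genhelm_adj n m))) /\
  (forall (T : finType) (e : rel T), symmetric e -> irreflexive e ->
     unimodal (Dt (H3_adj e))) /\
  (forall (T : finType) (e : rel T) (k : T -> nat), symmetric e -> irreflexive e ->
     (forall v, (1 <= k v)%N) -> unimodal (Dt (@sunlike_adj T e k))).
Proof.
split; first exact: helm_ok.
split; first exact: genhelm_ok.
split; first by move=> T e _ _; exact: H3_ok.
by move=> T e k _ _; exact: sun_ok.
Qed.
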